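(* Let $n \ge 1$ and $k > 1$ be integers. If the $n \times n$ Domineering board has outcome ${\rm 1st}$, then the $n \times kn$ board ($n$ rows, $kn$ columns) has outcome ${\rm 2nd}$ or $H$ when $k$ is even, and outcome ${\rm 1st}$ or $H$ when $k$ is odd. If the $n \times n$ board has outcome ${\rm 2nd}$, then the $n \times kn$ board has outcome ${\rm 2nd}$ or $H$ for every $k > 1$.
   Context: Domineering on an $a \times b$ board (a rectangle of $a$ rows and $b$ columns of unit cells): two players, Vera and Hepzibah, alternately place dominoes on empty cells; Vera places vertical dominoes (covering two vertically adjacent empty cells), Hepzibah places horizontal dominoes (covering two horizontally adjacent empty cells). A player who cannot move on her turn loses. The outcome class is $V$ if Vera wins with optimal play regardless of who moves first, $H$ if Hepzibah wins regardless of who moves first, ${\rm 1st}$ if the first player wins, and ${\rm 2nd}$ if the second player wins. *)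

(* Defs.v *)
From mathcomp Require Import all_boot.
Set Implicit Arguments. Unset Strict Implicit. Unset Printing Implicit Defensive.

Section Domineering.
Variables a b : nat.

(* a cell is (row, column) *)
Definition cell : finType := ('I_a * 'I_b)%type.

Definition vadj (c d : cell) : bool :=
  (c.2 == d.2) && (val d.1 == (val c.1).+1).
Definition hadj (c d : cell) : bool :=
  (c.1 == d.1) && (val d.2 == (val c.2).+1).

(* [win_fuel fuel vera S]: the player to move (Vera if [vera], else
   Hepzibah) wins from the position where the cells of S are covered.
   A player who cannot move loses. *)
Fixpoint win_fuel (fuel : nat) (vera : bool) (S : {set cell}) : bool :=
  match fuel with
  | 0 => false
  | fuel'.+1 =>
      [exists c : cell, exists d : cell,
        [&& (if vera then vadj c d else hadj c d), c \notin S, d \notin S &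
            ~~ win_fuel fuel' (~~ vera) (c |: (d |: S))]]
  end.

(* the fuel #|~: S|.+1 exceeds the number of moves that can still be played *)
Definition wins (vera : bool) (S : {set cell}) : bool :=
  win_fuel (#|~: S|).+1 vera S.

Definition vera_first_wins : bool := wins true set0.
Definition hepz_first_wins : bool := wins false set0.
End Domineering.

Inductive outcome := OV | OH | OFirst | OSecond.

Definition outcome_of (a b : nat) : outcome :=
  match vera_first_wins a b, hepz_first_wins a b with
  | true, true => OFirst
  | false, false => OSecond
  | true, false => OV
  | false, true => OH
  end.

(* Main.v *)
Require Import Defs.
From mathcomp Require Import all_boot zify.

Lemma card_step a b (S : {set cell a b}) (c d : cell a b) :
  c \notin S -> #|~: (c |: (d |: S))| < #|~: S|.
Proof.
move=> cS; apply: proper_card; rewrite properE !setCS; apply/andP; split.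
  by apply/subsetP => x xS; rewrite !inE xS !orbT.
by apply/subsetPn; exists c; rewrite ?inE ?eqxx.
Qed.

Arguments card_step {a b S c} d.

Lemma fuel_eq a b f g v (S : {set cell a b}) :
  #|~: S| < f -> #|~: S| < g -> win_fuel f v S = win_fuel g v S.
Proof.
elim: f g v S => [|f IH] [|g] v S //= hf hg.
apply: eq_existsb => c; apply: eq_existsb => d.
case cS: (c \in S); first by rewrite /= !andbF.
have h := card_step d (negbT cS).
by rewrite (IH g) //; apply: leq_trans h _.
Qed.

Lemma winsE a b v (S : {set cell a b}) :
  wins v S = [exists c, exists d, [&& (if v then vadj c d else hadj c d),
     c \notin S, d \notin S & ~~ wins (~~ v) (c |: (d |: S))]].
Proof.
rewrite /wins /=; apply: eq_existsb => c; apply: eq_existsb => d.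
case cS: (c \in S); first by rewrite /= !andbF.
have h := card_step d (negbT cS).
by rewrite (@fuel_eq a b #|~: S| #|~: (c |: (d |: S))|.+1).
Qed.

Lemma strat a b (I : {set cell a b} -> Prop) :
 (forall S, I S -> forall c d, vadj c d -> c \notin S -> d \notin S ->
   exists e f, [/\ hadj e f, e \notin c |: (d |: S), f \notin c |: (d |: S)
     & I (e |: (f |: (c |: (d |: S))))]) ->
 forall S, I S -> ~~ wins true S.
Proof.
move=> step S; move: (ltnSn #|~:S|); move: {2}#|~: S|.+1 => m.
elim: m S => [|m IH] S // hS IS.
rewrite winsE; apply/negP => /existsP [c /existsP [d /and4P [hv cS dS]]].
have [e [f [he eS fS I2]]] := step S IS c d hv cS dS.
move/negP; apply; rewrite winsE; apply/existsP; exists e; apply/existsP; exists f.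
rewrite he eS fS /=; apply: IH I2.
have h1 := card_step f eS; have h2 := card_step d cS; lia.
Qed.


Lemma emb_lt n k (t : 'I_k) (c : 'I_n) : t * n + c < k * n.
Proof.
have h1 := ltn_ord t; have h2 := ltn_ord c.
apply: (@leq_trans (t * n + n)); first by rewrite ltn_add2l.
by rewrite addnC -mulSn leq_mul2r h1 orbT.
Qed.

Definition emb n k (t : 'I_k) (x : cell n n) : cell n (k * n) :=
  (x.1, Ordinal (@emb_lt n k t x.2)).

Definition tr n (x : cell n n) : cell n n := (x.2, x.1).

Arguments tr {n}.
Arguments emb {n k}.
Lemma trK n : involutive (@tr n). Proof. by case. Qed.

Lemma tr_eq n (x y : cell n n) : (tr x == tr y) = (x == y).
Proof. by apply/eqP/eqP => [h|->//]; rewrite -(trK n x) h trK. Qed.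

Arguments tr_eq {n}.
Lemma tr_eqL n (x y : cell n n) : (x == tr y) = (tr x == y).
Proof. by rewrite -tr_eq trK. Qed.

Lemma col_eq n (t t' c c' : nat) : c < n -> c' < n ->
  (t * n + c == t' * n + c') = (t == t') && (c == c').
Proof.
move=> hc hc'; apply/eqP/andP => [h|[/eqP-> /eqP->]] //.
have n0 : 0 < n by lia.
have ht : t = t'.
  by have := congr1 (divn^~ n) h; rewrite /= !divnMDl // !divn_small // !addn0.
by subst; split => //; apply/eqP; lia.
Qed.

Lemma emb_eq n k (t t' : 'I_k) (x x' : cell n n) :
  (emb t x == emb t' x') = (t == t') && (x == x').
Proof.
case: x x' => [r c] [r' c']; rewrite /emb /= !xpair_eqE. rewrite -[X in _ && X]val_eqE /= col_eq //.
by rewrite andbCA.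
Qed.

Lemma hadj_emb n k (t : 'I_k) (x y : cell n n) :
  hadj (emb t x) (emb t y) = hadj x y.
Proof. by rewrite /hadj /emb /= -addnS eqn_add2l. Qed.

Lemma vadj_emb n k (t t' : 'I_k) (x y : cell n n) :
  vadj (emb t x) (emb t' y) = (t == t') && vadj x y.
Proof. by rewrite /vadj /emb /= -val_eqE /= col_eq // andbA. Qed.

Lemma emb_surj n k (y : cell n (k * n)) : 0 < n -> exists t x, y = @emb n k t x.
Proof.
move=> n0; case: y => r j.
have ht : j %/ n < k by rewrite ltn_divLR.
exists (Ordinal ht), (r, Ordinal (ltn_pmod j n0)).
by rewrite /emb /=; congr pair; apply: val_inj => /=; rewrite -divn_eq.
Qed.

Definition proj n k (S : {set cell n (k * n)}) (t : 'I_k) : {set cell n n} :=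
  [set x | emb t x \in S].

Arguments proj {n k}.
Definition partner (t : nat) := if odd t then t.-1 else t.+1.

Lemma partnerK : involutive partner.
Proof.
case => [|t] //; rewrite /partner /=; case ho: (odd t) => /=; rewrite ?ho //.
Qed.

Lemma partner_eq t t' : (partner t' == partner t) = (t' == t).
Proof. by apply/eqP/eqP => [h|->//]; rewrite -(partnerK t) -h partnerK. Qed.

Lemma partner_eq2 t t' : (partner t' == t) = (t' == partner t).
Proof. by rewrite -{1}(partnerK t) partner_eq. Qed.

Lemma partner_neq t : partner t != t.
Proof. rewrite /partner; case: t => [|t] //=; case: (odd t) => /=; lia. Qed.

Lemma partner_big k t : t < k -> k <= partner t -> t.+1 = k /\ ~~ odd t.
Proof. rewrite /partner; case: (odd t) => /=; lia. Qed.


Definition Inv n k (S : {set cell n (k * n)}) : Prop :=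
 (forall t u : 'I_k, val u = partner t -> forall x, (emb u x \in S) = (emb t (tr x) \in S)) /\
 (forall t : 'I_k, k <= partner t -> ~~ wins true (proj S t)).

Arguments Inv {n k}.
Lemma orb_perm a b c d e : [|| a, b, c, d | e] = [|| c, d, a, b | e].
Proof. by case: a b c d e => [] [] [] [] []. Qed.

Lemma step n k : 0 < n -> forall S : {set cell n (k * n)}, Inv S ->
  forall c d, vadj c d -> c \notin S -> d \notin S ->
   exists e f, [/\ hadj e f, e \notin c |: (d |: S), f \notin c |: (d |: S)
     & Inv (e |: (f |: (c |: (d |: S))))].
Proof.
move=> n0 S [P1 P2] c d hv cS dS.
have [t [lc ec]] := @emb_surj n k c n0; have [t' [ld ed]] := @emb_surj n k d n0; subst c d.
move: hv; rewrite vadj_emb => /andP [/eqP ett hv]; subst t'.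
case: (ltnP (partner t) k) => hp.
- set u : 'I_k := Ordinal hp.
  have ut : (u == t) = false by apply/negbTE; rewrite -val_eqE /= partner_neq.
  have tu : (t == u) = false by rewrite eq_sym.
  exists (emb u (tr lc)), (emb u (tr ld)); split.
  + by rewrite hadj_emb.
  + by rewrite !inE !emb_eq ut (P1 t u) // trK.
  + by rewrite !inE !emb_eq ut (P1 t u) // trK.
  split.
  + move=> t1 u1 hu x.
    have e1 : (u1 == u) = (t1 == t) by rewrite -val_eqE /= hu partner_eq.
    have e2 : (u1 == t) = (t1 == u) by rewrite -val_eqE /= hu partner_eq2 -val_eqE.
    rewrite !inE !emb_eq e1 e2 !tr_eq !tr_eqL (P1 t1 u1) //.
    by rewrite orb_perm.
  + move=> t0 hp0.
    have h1 : (t0 == t) = false by apply/negbTE; apply: contraTneq hp0 => ->; rewrite -ltnNge.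
    have h2 : (t0 == u) = false.
      apply/negbTE; apply: contraTneq hp0 => ->; rewrite -ltnNge /= partnerK //.
    suff -> : proj (emb u (tr lc) |: (emb u (tr ld) |: (emb t lc |: (emb t ld |: S)))) t0
         = proj S t0 by apply: P2.
    by apply/setP => x; rewrite !inE !emb_eq h1 h2.
- have W : wins false (lc |: (ld |: proj S t)).
    apply: contraNT (P2 t hp) => nW; rewrite winsE; apply/existsP; exists lc.
    apply/existsP; exists ld; rewrite hv /= !inE cS dS /=.
    rewrite /= in nW; exact: nW.
  move: W; rewrite winsE => /existsP [e' /existsP [f' /and4P [he eL fL W2]]].
  exists (emb t e'), (emb t f'); split.
  + by rewrite hadj_emb.
  + by move: eL; rewrite !inE !emb_eq eqxx.
  + by move: fL; rewrite !inE !emb_eq eqxx.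
  split.
  + move=> t1 u1 hu x.
    have h1 : (t1 == t) = false.
      by apply/negbTE; apply: contraTneq hp => <-; rewrite -hu -ltnNge ltn_ord.
    have h2 : (u1 == t) = false.
      apply/negbTE; apply: contraTneq hp => e; rewrite -e hu partnerK -ltnNge ltn_ord //.
    by rewrite !inE !emb_eq h1 h2 /= (P1 t1 u1).
  + move=> t0 hp0.
    have -> : t0 = t.
      have [a1 _] := @partner_big k t0 (ltn_ord t0) hp0.
      have [a2 _] := @partner_big k t (ltn_ord t) hp.
      by apply: ord_inj; lia.
    suff -> : proj (emb t e' |: (emb t f' |: (emb t lc |: (emb t ld |: S)))) t
         = e' |: (f' |: (lc |: (ld |: proj S t))) by [].
    by apply/setP => x; rewrite !inE !emb_eq eqxx.
Qed.


Lemma lemA n k : 0 < n -> (~~ odd k \/ ~~ vera_first_wins n n) ->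
  vera_first_wins n (k * n) = false.
Proof.
move=> n0 hk; apply/negbTE; rewrite /vera_first_wins.
apply: (@strat n (k * n) Inv (@step n k n0)); split.
  by move=> t u _ x; rewrite !inE.
move=> t hp; have [a1 a2] := @partner_big k t (ltn_ord t) hp.
case: hk => hk.
  by exfalso; move: hk; rewrite -a1 /= a2.
suff -> : @proj n k set0 t = set0 by [].
by apply/setP => x; rewrite !inE.
Qed.

Lemma lemB n k : 0 < n -> odd k -> hepz_first_wins n n ->
  hepz_first_wins n (k * n).
Proof.
move=> n0 ok; rewrite /hepz_first_wins winsE => /existsP [e' /existsP [f' /and4P [he _ _ W2]]].
case: k ok => [|k] //= ok.
set t : 'I_k.+1 := ord_max.
have hp : k.+1 <= partner t by rewrite /partner /= (negbTE ok).
rewrite winsE; apply/existsP; exists (emb t e'); apply/existsP; exists (emb t f').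
rewrite hadj_emb he !inE /=.
apply: (@strat n (k.+1 * n) Inv (@step n k.+1 n0)); split.
- move=> t1 u1 hu x.
  have h1 : (t1 == t) = false.
    by apply/negbTE; apply: contraTneq hp => <-; rewrite -hu -ltnNge ltn_ord.
  have h2 : (u1 == t) = false.
    apply/negbTE; apply: contraTneq hp => e; rewrite -e hu partnerK -ltnNge ltn_ord //.
  by rewrite !inE !emb_eq h1 h2.
- move=> t0 hp0.
  have -> : t0 = t.
    have [a1 _] := @partner_big k.+1 t0 (ltn_ord t0) hp0.
    by apply: ord_inj; rewrite /= ; lia.
  suff -> : proj (emb t e' |: (emb t f' |: set0)) t = e' |: (f' |: set0) by [].
  by apply/setP => x; rewrite !inE !emb_eq eqxx.
Qed.

Theorem mainTheorem11 (n k : nat) (hn : 1 <= n) (hk : 1 < k) :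
  (outcome_of n n = OFirst ->
     if ~~ odd k then outcome_of n (k * n) = OSecond \/ outcome_of n (k * n) = OH
     else outcome_of n (k * n) = OFirst \/ outcome_of n (k * n) = OH) /\
  (outcome_of n n = OSecond ->
     outcome_of n (k * n) = OSecond \/ outcome_of n (k * n) = OH).
Proof.
rewrite /outcome_of.
case Vn: (vera_first_wins n n); case Hn: (hepz_first_wins n n) => //; split => // _.
- case ok: (odd k) => /=.
  + by rewrite (@lemB n k hn ok Hn); case: (vera_first_wins n (k * n)); [left|right].
  + rewrite (@lemA n k hn); last by left; rewrite ok.
    by case: (hepz_first_wins n (k * n)); [right|left].
- rewrite (@lemA n k hn); last by right; rewrite Vn.
  by case: (hepz_first_wins n (k * n)); [right|left].
Qed.
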